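(* Let $A$ and $B$ be categories with variances, let $(R_1,L_1)$ be a span on $A$ and $(R_2,L_2)$ a span on $B$, and let $F\colon A\times B\rightarrow C$ be a functor of variance with respect to the product variance on $A\times B$. Let $L=L_1\times L_2\colon R_1\times R_2\rightarrow A\times B$. Assume that for every object $b$ of $B$ the end $\int_{L_1}F^b$ exists with universal wedge $\omega^b=(\omega^b_x\colon\int_{L_1}F^b\rightarrow F(L_1(x),b))_{x\in R_1}$, and let $\int_{L_1}F\colon B\rightarrow C$ be the unique functor of variance with $(\int_{L_1}F)(b)=\int_{L_1}F^b$ on objects and satisfying $F(id_{L_1(x)},g)\circ\omega^{g_s}_x=\omega^{g_t}_x\circ(\int_{L_1}F)(g)$ for all objects $x$ of $R_1$ and morphisms $g$ of $B$. Then the assignment $$(c,\theta)\mapsto (c,\tilde\theta),\qquad \tilde\theta_{x,y}=\omega^{L_2(y)}_x\circ\theta_y\ \ \text{for objects } (x,y) \text{ of } R_1\times R_2,$$ (acting as the identity on underlying morphisms) defines an isomorphism between the category of $L_2$-wedges of $\int_{L_1}F$ and the category of $L$-wedges of $F$. In particular, the end $\int_L F$ exists if and only if the end $\int_{L_2}\int_{L_1}F$ exists, and if one exists, they agree.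
   Context: A variance on a category $A$ is a pair $(E,M)$ of subcategories containing all objects such that every morphism $f$ factors uniquely as $f=me$ and uniquely as $f=e'm'$ with $e,e'$ in $E$ (covariant morphisms) and $m,m'$ in $M$ (contravariant morphisms). For $f\colon x\rightarrow y$ write $f=f^mf^e$ with $f^e\colon x\rightarrow f_t$ in $E$, $f^m\colon f_t\rightarrow y$ in $M$, and $f=f_ef_m$ with $f_m\colon x\rightarrow f_s$ in $M$, $f_e\colon f_s\rightarrow y$ in $E$. A functor $F\colon A\rightarrow C$ of variance $(E,M)$ assigns objects to objects and to each morphism $f$ a morphism $F(f)\colon F(f_s)\rightarrow F(f_t)$, preserving identities and satisfying, for composable $x\xrightarrow{f}y\xrightarrow{g}z$, $F(gf)=F((g^ef^m)^e)F(f)F((g_mf_e)_m)=F((g^ef^m)^m)F(g)F((g_mf_e)_e)$. The product variance on $A\times B$: a morphism $(f,g)$ is covariant (resp. contravariant) iff $f$ and $g$ both are. For $F\colon A\times B\rightarrow C$ of variance and an object $b$ of $B$, $F^b\colon A\rightarrow C$ is the functor of variance $F^b(x)=F(x,b)$, $F^b(f)=F(f,id_b)$. A span on $A$ is a pair $(R,L)$ of a category $R$ and a functor $L\colon R\rightarrow A$. For a functor of variance $G\colon A\rightarrow C$, an $L$-wedge of $G$ is a pair $(c,\eta)$ with $c$ an object of $C$ and $\eta=(\eta_x\colon c\rightarrow G(Lx))_{x\in R}$ satisfying $G(L(f)^e)\eta_x=G(L(f)^m)\eta_y$ for every morphism $f\colon x\rightarrow y$ of $R$; a morphism $(c,\eta)\rightarrow(d,\theta)$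 of $L$-wedges is a morphism $h\colon c\rightarrow d$ of $C$ with $\theta_x h=\eta_x$ for all $x$. The end $\int_L G$ is a terminal $L$-wedge, whose family is called the universal wedge. *)

(* Defs.v *)
(* Categories are encoded "arrows-only": a type of objects, a
   type of arrows with domain/codomain maps, identities and a total
   composition operation whose laws are required only for composable pairs.
   This avoids dependent hom-types (and the transports they would force in
   the definition of functors of variance). *)
Set Implicit Arguments.
Unset Strict Implicit.

Record Cat := {
  Ob : Type;
  Arr : Type;
  dom : Arr -> Ob;
  cod : Arr -> Ob;
  idc : Ob -> Arr;
  comp : Arr -> Arr -> Arr;  (* comp g f = g o f *)
  dom_id : forall x, dom (idc x) = x;
  cod_id : forall x, cod (idc x) = x;
  dom_comp : forall f g, cod f = dom g -> dom (comp g f) = dom f;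
  cod_comp : forall f g, cod f = dom g -> cod (comp g f) = cod g;
  comp_idl : forall f, comp (idc (cod f)) f = f;
  comp_idr : forall f, comp f (idc (dom f)) = f;
  comp_assoc : forall f g h, cod f = dom g -> cod g = dom h ->
      comp h (comp g f) = comp (comp h g) f
}.

Arguments dom {c} _.
Arguments cod {c} _.
Arguments idc {c} _.
Arguments comp {c} _ _.

Definition prodCat (A B : Cat) : Cat.
Proof.
  refine {| Ob := Ob A * Ob B;
            Arr := Arr A * Arr B;
            dom := fun f => (dom (fst f), dom (snd f));
            cod := fun f => (cod (fst f), cod (snd f));
            idc := fun x => (idc (fst x), idc (snd x));
            comp := fun g f => (comp (fst g) (fst f), comp (snd g) (snd f)) |}.
  - intros [x y]; simpl; rewrite !dom_id; reflexivity.
  - intros [x y]; simpl; rewrite !cod_id; reflexivity.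
  - intros [f1 f2] [g1 g2] H; injection H; intros; simpl in *;
      rewrite !dom_comp; auto.
  - intros [f1 f2] [g1 g2] H; injection H; intros; simpl in *;
      rewrite !cod_comp; auto.
  - intros [f1 f2]; simpl; rewrite !comp_idl; reflexivity.
  - intros [f1 f2]; simpl; rewrite !comp_idr; reflexivity.
  - intros [f1 f2] [g1 g2] [h1 h2] H1 H2; injection H1; injection H2; intros;
      simpl in *; rewrite !comp_assoc; auto.
Defined.

(* The (unique) factorizations are recorded:
     f = um f o ue f   (ue f = f^e : x -> f_t,  um f = f^m : f_t -> y)
     f = le f o lm f   (lm f = f_m : x -> f_s,  le f = f_e : f_s -> y). *)
Record variance (A : Cat) := {
  vE : Arr A -> Prop;
  vM : Arr A -> Prop;
  vE_id : forall x, vE (idc x);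
  vM_id : forall x, vM (idc x);
  vE_comp : forall f g, cod f = dom g -> vE f -> vE g -> vE (comp g f);
  vM_comp : forall f g, cod f = dom g -> vM f -> vM g -> vM (comp g f);
  ue : Arr A -> Arr A;
  um : Arr A -> Arr A;
  lm : Arr A -> Arr A;
  le : Arr A -> Arr A;
  ue_E : forall f, vE (ue f);
  um_M : forall f, vM (um f);
  ue_cd : forall f, cod (ue f) = dom (um f);
  ue_eq : forall f, comp (um f) (ue f) = f;
  ue_uniq : forall f e m, vE e -> vM m -> cod e = dom m -> comp m e = f ->
      e = ue f /\ m = um f;
  lm_M : forall f, vM (lm f);
  le_E : forall f, vE (le f);
  lm_cd : forall f, cod (lm f) = dom (le f);
  lm_eq : forall f, comp (le f) (lm f) = f;
  lm_uniq : forall f m e, vM m -> vE e -> cod m = dom e -> comp e m = f ->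
      m = lm f /\ e = le f
}.

Definition vtgt (A : Cat) (V : variance A) (f : Arr A) : Ob A := cod (ue V f).
Definition vsrc (A : Cat) (V : variance A) (f : Arr A) : Ob A := cod (lm V f).

Lemma pair_inj_fst {X Y : Type} (a b : X * Y) : a = b -> fst a = fst b.
Proof. intros ->; reflexivity. Qed.
Lemma pair_inj_snd {X Y : Type} (a b : X * Y) : a = b -> snd a = snd b.
Proof. intros ->; reflexivity. Qed.

Definition prodVar (A B : Cat) (VA : variance A) (VB : variance B)
  : variance (prodCat A B).
Proof.
  refine (@Build_variance (prodCat A B)
            (fun f : Arr A * Arr B => vE VA (fst f) /\ vE VB (snd f))
            (fun f : Arr A * Arr B => vM VA (fst f) /\ vM VB (snd f))
            _ _ _ _
            (fun f : Arr A * Arr B => (ue VA (fst f), ue VB (snd f)))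
            (fun f : Arr A * Arr B => (um VA (fst f), um VB (snd f)))
            (fun f : Arr A * Arr B => (lm VA (fst f), lm VB (snd f)))
            (fun f : Arr A * Arr B => (le VA (fst f), le VB (snd f)))
            _ _ _ _ _ _ _ _ _ _).
  - intros x; split; apply vE_id.
  - intros x; split; apply vM_id.
  - intros f g H [H1 H2] [H3 H4]; split; simpl;
      [apply (@vE_comp _ VA) | apply (@vE_comp _ VB)]; auto;
      [apply (pair_inj_fst H) | apply (pair_inj_snd H)].
  - intros f g H [H1 H2] [H3 H4]; split; simpl;
      [apply (@vM_comp _ VA) | apply (@vM_comp _ VB)]; auto;
      [apply (pair_inj_fst H) | apply (pair_inj_snd H)].
  - intros f; split; apply ue_E.
  - intros f; split; apply um_M.
  - intros f; simpl; rewrite !ue_cd; reflexivity.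
  - intros [f1 f2]; simpl; rewrite !ue_eq; reflexivity.
  - intros [f1 f2] [e1 e2] [m1 m2] [H1 H2] [H3 H4] H5 H6; simpl in *.
    injection H5; injection H6; intros.
    destruct (@ue_uniq _ VA f1 _ _ H1 H3) as [-> ->]; auto.
    destruct (@ue_uniq _ VB f2 _ _ H2 H4) as [-> ->]; auto.
  - intros f; split; apply lm_M.
  - intros f; split; apply le_E.
  - intros f; simpl; rewrite !lm_cd; reflexivity.
  - intros [f1 f2]; simpl; rewrite !lm_eq; reflexivity.
  - intros [f1 f2] [m1 m2] [e1 e2] [H1 H2] [H3 H4] H5 H6; simpl in *.
    injection H5; injection H6; intros.
    destruct (@lm_uniq _ VA f1 _ _ H1 H3) as [-> ->]; auto.
    destruct (@lm_uniq _ VB f2 _ _ H2 H4) as [-> ->]; auto.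
Defined.

Record functor (R A : Cat) := {
  fob : Ob R -> Ob A;
  fmor : Arr R -> Arr A;
  fdom : forall f, dom (fmor f) = fob (dom f);
  fcod : forall f, cod (fmor f) = fob (cod f);
  fid : forall x, fmor (idc x) = idc (fob x);
  fcomp : forall f g, cod f = dom g -> fmor (comp g f) = comp (fmor g) (fmor f)
}.

Definition prodFunctor (R1 A R2 B : Cat) (L1 : functor R1 A) (L2 : functor R2 B)
  : functor (prodCat R1 R2) (prodCat A B).
Proof.
  refine (@Build_functor (prodCat R1 R2) (prodCat A B)
            (fun x : Ob R1 * Ob R2 => (fob L1 (fst x), fob L2 (snd x)))
            (fun f : Arr R1 * Arr R2 => (fmor L1 (fst f), fmor L2 (snd f)))
            _ _ _ _).
  - intros f; simpl; rewrite !fdom; reflexivity.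
  - intros f; simpl; rewrite !fcod; reflexivity.
  - intros x; simpl; rewrite !fid; reflexivity.
  - intros f g H; simpl; rewrite (fcomp L1 (pair_inj_fst H)),
      (fcomp L2 (pair_inj_snd H)); reflexivity.
Defined.

Record vfunctor (A : Cat) (V : variance A) (C : Cat) := {
  vfob : Ob A -> Ob C;
  vfmor : Arr A -> Arr C;
  vfdom : forall f, dom (vfmor f) = vfob (vsrc V f);
  vfcod : forall f, cod (vfmor f) = vfob (vtgt V f);
  vfid : forall x, vfmor (idc x) = idc (vfob x);
  vfcomp1 : forall f g, cod f = dom g ->
     vfmor (comp g f) =
       comp (vfmor (ue V (comp (ue V g) (um V f))))
            (comp (vfmor f) (vfmor (lm V (comp (lm V g) (le V f)))));
  vfcomp2 : forall f g, cod f = dom g ->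
     vfmor (comp g f) =
       comp (vfmor (um V (comp (ue V g) (um V f))))
            (comp (vfmor g) (vfmor (le V (comp (lm V g) (le V f)))))
}.

(* L-wedges, stated for raw object/morphism assignments (Gob, Gmor) of a
   would-be functor of variance A -> C (so that F^b can be used directly):
   (c, eta) with eta_x : c -> G(L x) and
   G(L(f)^e) eta_x = G(L(f)^m) eta_y for every f : x -> y in R. *)
Definition isWedgeRaw (R A C : Cat) (V : variance A) (L : functor R A)
  (Gob : Ob A -> Ob C) (Gmor : Arr A -> Arr C) (c : Ob C) (eta : Ob R -> Arr C)
  : Prop :=
  (forall x, dom (eta x) = c /\ cod (eta x) = Gob (fob L x)) /\
  (forall f : Arr R,
     comp (Gmor (ue V (fmor L f))) (eta (dom f)) =
     comp (Gmor (um V (fmor L f))) (eta (cod f))).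

Definition wedgeMor (R C : Cat) (c : Ob C) (eta : Ob R -> Arr C)
  (d : Ob C) (theta : Ob R -> Arr C) (h : Arr C) : Prop :=
  dom h = c /\ cod h = d /\ forall x, comp (theta x) h = eta x.

Definition isEndRaw (R A C : Cat) (V : variance A) (L : functor R A)
  (Gob : Ob A -> Ob C) (Gmor : Arr A -> Arr C) (c : Ob C) (eta : Ob R -> Arr C)
  : Prop :=
  isWedgeRaw V L Gob Gmor c eta /\
  forall d theta, isWedgeRaw V L Gob Gmor d theta ->
    exists h, wedgeMor d theta c eta h /\
      forall h', wedgeMor d theta c eta h' -> h' = h.

Definition isWedge (R A C : Cat) (V : variance A) (L : functor R A)
  (G : vfunctor V C) := isWedgeRaw V L (vfob G) (vfmor G).
Definition isEnd (R A C : Cat) (V : variance A) (L : functor R A)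
  (G : vfunctor V C) := isEndRaw V L (vfob G) (vfmor G).

(* Main.v *)
Require Import Defs.
From Stdlib Require Import IndefiniteDescription FunctionalExtensionality.
Set Implicit Arguments.
Unset Strict Implicit.

Lemma id_id (A : Cat) (x : Ob A) : comp (idc x) (idc x) = idc x.
Proof. pose proof (comp_idl (idc x)) as H. rewrite cod_id in H. exact H. Qed.

Lemma ue_of_E (A : Cat) (V : variance A) f : vE V f -> ue V f = f /\ um V f = idc (cod f).
Proof.
  intro H. destruct (@ue_uniq _ V f f (idc (cod f))) as [H1 H2]; auto.
  apply vM_id. rewrite dom_id; auto. apply comp_idl.
Qed.
Lemma ue_of_M (A : Cat) (V : variance A) f : vM V f -> ue V f = idc (dom f) /\ um V f = f.
Proof.
  intro H. destruct (@ue_uniq _ V f (idc (dom f)) f) as [H1 H2]; auto.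
  apply vE_id. rewrite cod_id; auto. apply comp_idr.
Qed.
Lemma lm_of_E (A : Cat) (V : variance A) f : vE V f -> lm V f = idc (dom f) /\ le V f = f.
Proof.
  intro H. destruct (@lm_uniq _ V f (idc (dom f)) f) as [H1 H2]; auto.
  apply vM_id. rewrite cod_id; auto. apply comp_idr.
Qed.
Lemma lm_of_M (A : Cat) (V : variance A) f : vM V f -> lm V f = f /\ le V f = idc (cod f).
Proof.
  intro H. destruct (@lm_uniq _ V f f (idc (cod f))) as [H1 H2]; auto.
  apply vE_id. rewrite dom_id; auto. apply comp_idl.
Qed.

Lemma dom_ue (A : Cat) (V : variance A) f : dom (ue V f) = dom f.
Proof. rewrite <- (ue_eq V f) at 2. rewrite dom_comp; auto. apply ue_cd. Qed.
Lemma cod_um (A : Cat) (V : variance A) f : cod (um V f) = cod f.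
Proof. rewrite <- (ue_eq V f) at 2. rewrite cod_comp; auto. apply ue_cd. Qed.

Lemma vf_E_dom (A C : Cat) (V : variance A) (G : vfunctor V C) f :
  vE V f -> dom (vfmor G f) = vfob G (dom f) /\ cod (vfmor G f) = vfob G (cod f).
Proof.
  intro H. rewrite vfdom, vfcod. unfold vsrc, vtgt.
  destruct (ue_of_E H) as [-> _]. destruct (lm_of_E H) as [-> _].
  rewrite cod_id; auto.
Qed.
Lemma vf_M_dom (A C : Cat) (V : variance A) (G : vfunctor V C) f :
  vM V f -> dom (vfmor G f) = vfob G (cod f) /\ cod (vfmor G f) = vfob G (dom f).
Proof.
  intro H. rewrite vfdom, vfcod. unfold vsrc, vtgt.
  destruct (ue_of_M H) as [-> _]. destruct (lm_of_M H) as [-> _].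
  rewrite cod_id; auto.
Qed.

Lemma vf_E_comp (A C : Cat) (V : variance A) (G : vfunctor V C) f g :
  vE V f -> vE V g -> cod f = dom g ->
  vfmor G (comp g f) = comp (vfmor G g) (vfmor G f).
Proof.
  intros Hf Hg Hc. rewrite (vfcomp1 G Hc).
  destruct (ue_of_E Hg) as [-> _]. destruct (ue_of_E Hf) as [_ ->].
  destruct (lm_of_E Hg) as [-> _]. destruct (lm_of_E Hf) as [Hl ->].
  rewrite Hc, comp_idr. rewrite <- Hc, comp_idl.
  destruct (ue_of_E Hg) as [-> _]. rewrite Hl. rewrite vfid.
  destruct (vf_E_dom G Hf) as [Hd _]. rewrite <- Hd, comp_idr. reflexivity.
Qed.
Lemma vf_M_comp (A C : Cat) (V : variance A) (G : vfunctor V C) f g :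
  vM V f -> vM V g -> cod f = dom g ->
  vfmor G (comp g f) = comp (vfmor G f) (vfmor G g).
Proof.
  intros Hf Hg Hc. rewrite (vfcomp2 G Hc).
  destruct (ue_of_M Hg) as [-> _]. destruct (ue_of_M Hf) as [_ ->].
  destruct (lm_of_M Hg) as [-> Hl]. destruct (lm_of_M Hf) as [_ ->].
  rewrite <- Hc, comp_idl.
  destruct (ue_of_M Hf) as [_ ->]. rewrite Hc, comp_idr. rewrite Hl. rewrite vfid.
  destruct (vf_M_dom G Hg) as [Hd _]. rewrite <- Hd, comp_idr. reflexivity.
Qed.

Lemma vsrc_E (A : Cat) (V : variance A) f : vE V f -> vsrc V f = dom f.
Proof. intro H. unfold vsrc. destruct (lm_of_E H) as [-> _]. apply cod_id. Qed.
Lemma vtgt_E (A : Cat) (V : variance A) f : vE V f -> vtgt V f = cod f.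
Proof. intro H. unfold vtgt. destruct (ue_of_E H) as [-> _]. reflexivity. Qed.
Lemma vsrc_M (A : Cat) (V : variance A) f : vM V f -> vsrc V f = cod f.
Proof. intro H. unfold vsrc. destruct (lm_of_M H) as [-> _]. reflexivity. Qed.
Lemma vtgt_M (A : Cat) (V : variance A) f : vM V f -> vtgt V f = dom f.
Proof. intro H. unfold vtgt. destruct (ue_of_M H) as [-> _]. apply cod_id. Qed.

Lemma assoc4a (C : Cat) (P Q O T : Arr C) :
  cod T = dom O -> cod O = dom Q -> cod Q = dom P ->
  comp (comp P Q) (comp O T) = comp P (comp (comp Q O) T).
Proof.
  intros H1 H2 H3. rewrite <- (comp_assoc (f := comp O T) (g := Q) (h := P)); auto.
  - f_equal. apply comp_assoc; auto.
  - rewrite cod_comp; auto.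
Qed.
Lemma assoc4b (C : Cat) (P M N T : Arr C) :
  cod T = dom N -> cod N = dom M -> cod M = dom P ->
  comp P (comp (comp M N) T) = comp (comp P M) (comp N T).
Proof.
  intros H1 H2 H3. rewrite <- (comp_assoc (f := comp N T) (g := M) (h := P)); auto.
  - f_equal. symmetry. apply comp_assoc; auto.
  - rewrite cod_comp; auto.
Qed.

Theorem mainTheorem6 (A B C R1 R2 : Cat) (VA : variance A) (VB : variance B)
  (L1 : functor R1 A) (L2 : functor R2 B)
  (F : vfunctor (prodVar VA VB) C)
  (e : Ob B -> Ob C) (om : Ob B -> Ob R1 -> Arr C)
  (* for each b, (e b, om b) is the end of F^b := (x |-> F(x,b), f |-> F(f,id_b)) *)
  (Hend : forall b : Ob B,
      isEndRaw VA L1 (fun x => vfob F (x, b)) (fun f => vfmor F (f, idc b))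
               (e b) (om b))
  (* IF is the functor of variance int_{L1} F : B -> C *)
  (IF : vfunctor VB C)
  (HIFob : forall b, vfob IF b = e b)
  (HIFmor : forall (x : Ob R1) (g : Arr B),
      comp (vfmor F (idc (fob L1 x), g)) (om (vsrc VB g) x) =
      comp (om (vtgt VB g) x) (vfmor IF g)) :
  let L := prodFunctor L1 L2 in
  let tl := fun (theta : Ob R2 -> Arr C) (p : Ob (prodCat R1 R2)) =>
              comp (om (fob L2 (snd p)) (fst p)) (theta (snd p)) in
  (* the assignment sends L2-wedges of IF to L-wedges of F *)
  (forall c theta, isWedge L2 IF c theta -> isWedge L F c (tl theta)) /\
  (* it is surjective on objects *)
  (forall c zeta, isWedge L F c zeta ->
     exists theta, isWedge L2 IF c theta /\ forall p, zeta p = tl theta p) /\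
  (* it is injective on objects *)
  (forall c theta theta', isWedge L2 IF c theta -> isWedge L2 IF c theta' ->
     (forall p, tl theta p = tl theta' p) -> forall y, theta y = theta' y) /\
  (* it is the identity on morphisms, and bijective on hom-sets *)
  (forall c theta d theta' h, isWedge L2 IF c theta -> isWedge L2 IF d theta' ->
     (wedgeMor c theta d theta' h <-> @wedgeMor (prodCat R1 R2) C c (tl theta) d (tl theta') h)) /\
  (* consequences for ends *)
  (forall c theta, isWedge L2 IF c theta ->
     (isEnd L2 IF c theta <-> isEnd L F c (tl theta))) /\
  ((exists c zeta, isEnd L F c zeta) <-> (exists c theta, isEnd L2 IF c theta)).
Proof.
  intros L tl.
  assert (Tom : forall b x, dom (om b x) = e b /\ cod (om b x) = vfob F (fob L1 x, b)).
  { intros b x. apply (proj1 (proj1 (Hend b)) x). }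
  assert (OmW : forall b f1, comp (vfmor F (ue VA (fmor L1 f1), idc b)) (om b (dom f1)) =
                            comp (vfmor F (um VA (fmor L1 f1), idc b)) (om b (cod f1))).
  { intros b f1. apply (proj2 (proj1 (Hend b)) f1). }
  assert (FEty : forall a b, vE VA a -> vE VB b ->
            dom (vfmor F (a, b)) = vfob F (dom a, dom b) /\ cod (vfmor F (a, b)) = vfob F (cod a, cod b)).
  { intros a b Ha Hb. exact (vf_E_dom F (f := (a, b)) (conj Ha Hb)). }
  assert (FMty : forall a b, vM VA a -> vM VB b ->
            dom (vfmor F (a, b)) = vfob F (cod a, cod b) /\ cod (vfmor F (a, b)) = vfob F (dom a, dom b)).
  { intros a b Ha Hb. exact (vf_M_dom F (f := (a, b)) (conj Ha Hb)). }
  assert (Mono : forall b d k1 k2, dom k1 = d -> cod k1 = e b -> dom k2 = d -> cod k2 = e b ->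
            (forall x, comp (om b x) k1 = comp (om b x) k2) -> k1 = k2).
  { intros b d k1 k2 D1 C1 D2 C2 Heq.
    destruct (Hend b) as [_ U].
    destruct (U d (fun x => comp (om b x) k1)) as [h [_ Hu]].
    - split.
      + intros x. destruct (Tom b x) as [T1 T2]. rewrite dom_comp, cod_comp; auto; congruence.
      + intros f. destruct (Tom b (dom f)) as [T1 T2]. destruct (Tom b (cod f)) as [T3 T4].
        destruct (FEty (ue VA (fmor L1 f)) (idc b)) as [T5 _]. apply ue_E. apply vE_id.
        destruct (FMty (um VA (fmor L1 f)) (idc b)) as [T6 _]. apply um_M. apply vM_id.
        rewrite cod_um, fcod, cod_id in T6. rewrite dom_ue, fdom, dom_id in T5.
        rewrite !comp_assoc; try congruence; rewrite OmW; reflexivity.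
    - rewrite (Hu k1), (Hu k2); [reflexivity| |];
        repeat split; auto; intros x; (reflexivity || (symmetry; apply Heq)).
  }
  assert (P1 : forall c theta, isWedge L2 IF c theta -> isWedge L F c (tl theta)).
  { intros c theta [Tth Wth]. split.
    - intros [x y]. destruct (Tth y) as [T1 T2]. destruct (Tom (fob L2 y) x) as [T3 T4].
      rewrite HIFob in T2. unfold tl; simpl. rewrite dom_comp, cod_comp; auto; congruence.
    - intros [f1 f2]. unfold tl; simpl.
      set (a := ue VA (fmor L1 f1)). set (a' := um VA (fmor L1 f1)).
      set (b := ue VB (fmor L2 f2)). set (b' := um VB (fmor L2 f2)).
      remember (cod b) as z eqn:Hz.
      assert (Ea : vE VA a) by apply ue_E. assert (Ma' : vM VA a') by apply um_M.
      assert (Eb : vE VB b) by apply ue_E. assert (Mb' : vM VB b') by apply um_M.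
      assert (Da : dom a = fob L1 (dom f1)) by (unfold a; rewrite dom_ue, fdom; reflexivity).
      assert (Ca' : cod a' = fob L1 (cod f1)) by (unfold a'; rewrite cod_um, fcod; reflexivity).
      assert (Db : dom b = fob L2 (dom f2)) by (unfold b; rewrite dom_ue, fdom; reflexivity).
      assert (Cb' : cod b' = fob L2 (cod f2)) by (unfold b'; rewrite cod_um, fcod; reflexivity).
      assert (Db' : dom b' = z) by (rewrite Hz; unfold b, b'; symmetry; apply ue_cd).
      assert (Ca : cod a = dom a') by (unfold a, a'; apply ue_cd).
      assert (Dab : vfmor F (a, b) = comp (vfmor F (a, idc z)) (vfmor F (idc (dom a), b))).
      { rewrite <- (vf_E_comp F (f := (idc (dom a), b)) (g := (a, idc z))).
        - simpl. rewrite comp_idr. rewrite Hz, comp_idl. reflexivity.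
        - split; [apply vE_id | exact Eb].
        - split; [exact Ea | apply vE_id].
        - simpl. rewrite cod_id, dom_id. congruence. }
      assert (Dab' : vfmor F (a', b') = comp (vfmor F (a', idc z)) (vfmor F (idc (cod a'), b'))).
      { rewrite <- (vf_M_comp F (f := (a', idc z)) (g := (idc (cod a'), b'))).
        - simpl. rewrite comp_idl. rewrite <- Db', comp_idr. reflexivity.
        - split; [exact Ma' | apply vM_id].
        - split; [apply vM_id | exact Mb'].
        - simpl. rewrite cod_id, dom_id. congruence. }
      rewrite Dab, Dab'.
      pose proof (HIFmor (dom f1) b) as H1. rewrite (vsrc_E Eb), (vtgt_E Eb) in H1.
      pose proof (HIFmor (cod f1) b') as H2. rewrite (vsrc_M Mb'), (vtgt_M Mb') in H2.
      rewrite <- Hz in H1. rewrite Db' in H2. rewrite Db in H1. rewrite Cb' in H2.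
      rewrite Da, Ca'.
      destruct (Tth (dom f2)) as [T1 T2]. destruct (Tth (cod f2)) as [T1' T2'].
      rewrite HIFob in T2, T2'.
      destruct (Tom (fob L2 (dom f2)) (dom f1)) as [T3 T4].
      destruct (Tom (fob L2 (cod f2)) (cod f1)) as [T3' T4'].
      destruct (Tom z (dom f1)) as [T5 T6]. destruct (Tom z (cod f1)) as [T5' T6'].
      destruct (FEty (idc (fob L1 (dom f1))) b (vE_id _ _) Eb) as [T7 T8].
      destruct (FMty (idc (fob L1 (cod f1))) b' (vM_id _ _) Mb') as [T7' T8'].
      destruct (FEty a (idc z) Ea (vE_id _ _)) as [T9 _].
      destruct (FMty a' (idc z) Ma' (vM_id _ _)) as [T9' _].
      destruct (vf_E_dom IF Eb) as [T10 T11]. destruct (vf_M_dom IF Mb') as [T10' T11'].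
      rewrite !HIFob in T10, T11, T10', T11'.
      rewrite ?dom_id in T7. rewrite ?cod_id in T8. rewrite ?cod_id in T7'. rewrite ?dom_id in T8'. rewrite ?dom_id in T9. rewrite ?cod_id in T9'.
      rewrite assoc4a, H1, assoc4b; try congruence.
      rewrite (assoc4a (P := vfmor F (a', idc z))), H2, assoc4b; try congruence.
      pose proof (OmW z f1) as H3. pose proof (Wth f2) as H4.
      change (comp (vfmor F (a, idc z)) (om z (dom f1)) =
              comp (vfmor F (a', idc z)) (om z (cod f1))) in H3.
      change (comp (vfmor IF b) (theta (dom f2)) = comp (vfmor IF b') (theta (cod f2))) in H4.
      rewrite H3, H4. reflexivity. }
  assert (ueid : forall (X : Cat) (V : variance X) x, ue V (idc x) = idc x /\ um V (idc x) = idc x).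
  { intros X V x. destruct (ue_of_E (vE_id V x)) as [-> ->]. rewrite cod_id; auto. }
  assert (P2 : forall c zeta, isWedge L F c zeta ->
     exists theta, isWedge L2 IF c theta /\ forall p, zeta p = tl theta p).
  { intros c zeta [Tz Wz].
    assert (Ex : forall y, exists h, wedgeMor c (fun x => zeta (x, y)) (e (fob L2 y)) (om (fob L2 y)) h).
    { intros y. destruct (Hend (fob L2 y)) as [_ U].
      destruct (U c (fun x => zeta (x, y))) as [h [Hh _]].
      - split.
        + intros x. exact (Tz (x, y)).
        + intros f1. pose proof (Wz (f1, idc y)) as W. simpl in W.
          rewrite fid in W. destruct (ueid _ VB (fob L2 y)) as [E1 E2].
          rewrite E1, E2, dom_id, cod_id in W. exact W.
      - exists h; exact Hh. }
    exists (fun y => proj1_sig (constructive_indefinite_description _ (Ex y))).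
    set (theta := fun y => proj1_sig (constructive_indefinite_description _ (Ex y))).
    assert (Hth : forall y, wedgeMor c (fun x => zeta (x, y)) (e (fob L2 y)) (om (fob L2 y)) (theta y)).
    { intros y. unfold theta. exact (proj2_sig (constructive_indefinite_description _ (Ex y))). }
    split; [split|].
    - intros y. destruct (Hth y) as [H1 [H2 _]]. rewrite HIFob. auto.
    - intros g.
      set (b := ue VB (fmor L2 g)). set (b' := um VB (fmor L2 g)).
      remember (cod b) as z eqn:Hz.
      assert (Eb : vE VB b) by apply ue_E. assert (Mb' : vM VB b') by apply um_M.
      assert (Db : dom b = fob L2 (dom g)) by (unfold b; rewrite dom_ue, fdom; reflexivity).
      assert (Cb' : cod b' = fob L2 (cod g)) by (unfold b'; rewrite cod_um, fcod; reflexivity).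
      assert (Db' : dom b' = z) by (rewrite Hz; unfold b, b'; symmetry; apply ue_cd).
      pose proof (fun x => HIFmor x b) as H1. pose proof (fun x => HIFmor x b') as H2.
      simpl in H1, H2.
      rewrite (vsrc_E Eb), (vtgt_E Eb) in H1. rewrite (vsrc_M Mb'), (vtgt_M Mb') in H2.
      rewrite <- Hz, Db in H1. rewrite Db', Cb' in H2.
      destruct (Hth (dom g)) as [S1 [S2 S3]]. destruct (Hth (cod g)) as [S1' [S2' S3']].
      destruct (vf_E_dom IF Eb) as [T10 T11]. destruct (vf_M_dom IF Mb') as [T10' T11'].
      rewrite !HIFob in T10, T11, T10', T11'.
      assert (E1 : forall x, comp (om z x) (comp (vfmor IF b) (theta (dom g))) =
                             comp (vfmor F (idc (fob L1 x), b)) (zeta (x, dom g))).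
      { intros x. destruct (Tom z x) as [T5 T6]. destruct (Tom (fob L2 (dom g)) x) as [T3 T4].
        destruct (FEty (idc (fob L1 x)) b (vE_id _ _) Eb) as [T7 T8].
        rewrite dom_id in T7.
        rewrite (comp_assoc (f := theta (dom g))); try congruence.
        rewrite <- H1. rewrite <- comp_assoc; try congruence; rewrite S3; reflexivity. }
      assert (E2 : forall x, comp (om z x) (comp (vfmor IF b') (theta (cod g))) =
                             comp (vfmor F (idc (fob L1 x), b')) (zeta (x, cod g))).
      { intros x. destruct (Tom z x) as [T5 T6]. destruct (Tom (fob L2 (cod g)) x) as [T3 T4].
        destruct (FMty (idc (fob L1 x)) b' (vM_id _ _) Mb') as [T7 T8].
        rewrite cod_id in T7.
        rewrite (comp_assoc (f := theta (cod g))); try congruence.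
        rewrite <- H2. rewrite <- comp_assoc; try congruence; rewrite S3'; reflexivity. }
      apply (Mono z c).
      + rewrite dom_comp; congruence.
      + rewrite cod_comp; congruence.
      + rewrite dom_comp; congruence.
      + rewrite cod_comp; congruence.
      + intros x. rewrite E1, E2.
        pose proof (Wz (idc x, g)) as W. simpl in W.
        rewrite fid in W. destruct (ueid _ VA (fob L1 x)) as [U1 U2].
        rewrite U1, U2, dom_id, cod_id in W. exact W.
    - intros [x y]. unfold tl; simpl. destruct (Hth y) as [_ [_ H3]]. symmetry. apply H3. }
  assert (P3 : forall c theta theta', isWedge L2 IF c theta -> isWedge L2 IF c theta' ->
     (forall p, tl theta p = tl theta' p) -> forall y, theta y = theta' y).
  { intros c theta theta' [T _] [T' _] H y.
    destruct (T y) as [A1 A2]. destruct (T' y) as [A1' A2']. rewrite HIFob in A2, A2'.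
    apply (Mono (fob L2 y) c); auto. intros x. exact (H (x, y)). }
  assert (P4 : forall c theta d theta' h, isWedge L2 IF c theta -> isWedge L2 IF d theta' ->
     (wedgeMor c theta d theta' h <-> @wedgeMor (prodCat R1 R2) C c (tl theta) d (tl theta') h)).
  { intros c theta d theta' h [T _] [T' _]. split.
    - intros [Dh [Ch Hh]]. split; auto. split; auto. intros p. destruct p as [x y].
      unfold tl; simpl. destruct (T' y) as [A1 A2]. rewrite HIFob in A2.
      destruct (Tom (fob L2 y) x) as [B1 B2].
      rewrite <- comp_assoc; try congruence; rewrite Hh; reflexivity.
    - intros [Dh [Ch Hh]]. split; auto. split; auto. intros y.
      destruct (T' y) as [A1 A2]. destruct (T y) as [A3 A4]. rewrite HIFob in A2, A4.
      apply (Mono (fob L2 y) c).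
      + rewrite dom_comp; congruence.
      + rewrite cod_comp; congruence.
      + auto.
      + auto.
      + intros x. destruct (Tom (fob L2 y) x) as [B1 B2].
        rewrite comp_assoc; try congruence; exact (Hh (x, y)). }
  assert (P5 : forall c theta, isWedge L2 IF c theta ->
     (isEnd L2 IF c theta <-> isEnd L F c (tl theta))).
  { intros c theta Wt. split.
    - intros [_ U]. split; [apply P1; auto|]. intros d zeta Wz.
      destruct (P2 d zeta Wz) as [th [Wth Eq]].
      assert (zeta = tl th) by (extensionality p; apply Eq). subst zeta.
      destruct (U d th Wth) as [h [Hh Hu]]. exists h. split.
      + apply (proj1 (P4 d th c theta h Wth Wt)). exact Hh.
      + intros h' Hh'. apply Hu. apply (proj2 (P4 d th c theta h' Wth Wt)). exact Hh'.
    - intros [_ U]. split; auto. intros d th Wth.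
      destruct (U d (tl th) (P1 _ _ Wth)) as [h [Hh Hu]]. exists h. split.
      + apply (proj2 (P4 d th c theta h Wth Wt)). exact Hh.
      + intros h' Hh'. apply Hu. apply (proj1 (P4 d th c theta h' Wth Wt)). exact Hh'. }
  split; [exact P1|]. split; [exact P2|]. split; [exact P3|]. split; [exact P4|].
  split; [exact P5|]. split.
  - intros [c [zeta He]]. destruct (P2 c zeta (proj1 He)) as [th [Wth Eq]].
    assert (zeta = tl th) by (extensionality p; apply Eq). subst zeta.
    exists c, th. apply (proj2 (P5 c th Wth)). exact He.
  - intros [c [th He]]. exists c, (tl th). apply (proj1 (P5 c th (proj1 He))). exact He.
Qed.
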